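(* Let $(G,\cdot)$ be a loop with identity $e$ and $(H,\cdot)$ a non-trivial subloop such that $(xs\cdot z)s=x(sz\cdot s)$ for all $x,z\in G$, $s\in H$, and such that $s^2\in N_\rho(G)\cap H$ for all $s\in H$. Then for every $s\in H$, the map $L_sR_s^{-1}$ is a second Smarandache semi-automorphism of $G_H$, i.e. $e(L_sR_s^{-1})=e$ and $(ty\cdot t)L_sR_s^{-1}=(tL_sR_s^{-1}\cdot yL_sR_s^{-1})\,tL_sR_s^{-1}$ for all $y\in G$, $t\in H$.
   Context: Juxtaposition binds more tightly than $\cdot$. Maps are written on the right and composed left to right; $xR_s=x\cdot s$, $xL_s=s\cdot x$, $s^2=ss$. The right nucleus is $N_\rho(G)=\{a\in G: y\cdot xa=yx\cdot a\ \forall x,y\in G\}$. *)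

(* Defs.v *)
(* (T, mul) is a loop with identity e; ldiv / rdiv are the left and right
   divisions: ldiv x y is the unique z with x*z = y (so ldiv x = L_x^{-1}),
   rdiv y x is the unique z with z*x = y (so fun y => rdiv y x = R_x^{-1}). *)
Definition is_loop {T : Type} (mul : T -> T -> T) (e : T)
  (ldiv rdiv : T -> T -> T) : Prop :=
  (forall x, mul e x = x) /\ (forall x, mul x e = x) /\
  (forall x y, mul x (ldiv x y) = y) /\ (forall x y, ldiv x (mul x y) = y) /\
  (forall x y, mul (rdiv y x) x = y) /\ (forall x y, rdiv (mul y x) x = y).

Definition is_subloop {T : Type} (mul : T -> T -> T) (e : T)
  (ldiv rdiv : T -> T -> T) (H : T -> Prop) : Prop :=
  H e /\ (forall x y, H x -> H y -> H (mul x y)) /\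
  (forall x y, H x -> H y -> H (ldiv x y)) /\
  (forall x y, H x -> H y -> H (rdiv x y)).

Definition nontrivial_subloop {T : Type} (e : T) (H : T -> Prop) : Prop :=
  exists h, H h /\ h <> e.

Definition right_nucleus {T : Type} (mul : T -> T -> T) (a : T) : Prop :=
  forall x y, mul y (mul x a) = mul (mul y x) a.

(* The map L_s R_s^{-1} (maps act on the right, composed left to right):
   x |-> (s*x) R_s^{-1} = (s*x)/s. *)
Definition LsRsinv {T : Type} (mul : T -> T -> T) (rdiv : T -> T -> T)
  (s : T) (x : T) : T := rdiv (mul s x) s.

Definition second_S_semi_automorphism {T : Type} (mul : T -> T -> T) (e : T)
  (H : T -> Prop) (f : T -> T) : Prop :=
  f e = e /\
  (forall y t, H t -> f (mul (mul t y) t) = mul (mul (f t) (f y)) (f t)).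

(* Main.v *)
Require Import Defs.

Theorem corollary3p2 (T : Type) (mul : T -> T -> T) (e : T)
  (ldiv rdiv : T -> T -> T) (H : T -> Prop) :
  is_loop mul e ldiv rdiv ->
  is_subloop mul e ldiv rdiv H ->
  nontrivial_subloop e H ->
  (forall x z s, H s -> mul (mul (mul x s) z) s = mul x (mul (mul s z) s)) ->
  (forall s, H s -> right_nucleus mul (mul s s) /\ H (mul s s)) ->
  forall s, H s -> second_S_semi_automorphism mul e H (LsRsinv mul rdiv s).
Proof.
  intros [le [re [_ [_ [rdK rdC]]]]] _ _ B N s Hs.
  assert (RA : forall x u, H u -> mul (mul x u) u = mul x (mul u u)).
  { intros x u Hu. pose proof (B x e u Hu) as E. rewrite re, re in E. exact E. }
  assert (Cn : forall u v w, mul u w = mul v w -> u = v).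
  { intros u v w E. rewrite <- (rdC w u), <- (rdC w v), E. reflexivity. }
  destruct (N s Hs) as [Ns _].
  unfold second_S_semi_automorphism, LsRsinv. split.
  - rewrite re. transitivity (rdiv (mul e s) s); [rewrite le; reflexivity | apply rdC].
  - intros y t Ht.
    set (a := rdiv (mul s t) s). set (b := rdiv (mul s y) s).
    assert (Ea : mul a s = mul s t) by apply rdK.
    assert (Eb : mul b s = mul s y) by apply rdK.
    assert (K : mul (mul a s) y = mul (mul a b) s).
    { assert (mul (mul (mul a s) y) s = mul (mul (mul a b) s) s) as E.
      { rewrite B by exact Hs. rewrite <- Eb, RA by exact Hs.
        rewrite Ns. rewrite RA by exact Hs. reflexivity. }
      exact (Cn _ _ _ E). }
    assert (M : mul (mul (mul a b) a) s = mul s (mul (mul t y) t)).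
    { assert (mul (mul (mul (mul a b) a) s) s = mul (mul s (mul (mul t y) t)) s) as E.
      { rewrite RA by exact Hs. rewrite <- Ns. rewrite <- RA by exact Hs.
        rewrite Ea. rewrite <- B by exact Hs. rewrite <- K, Ea.
        rewrite B by exact Ht. reflexivity. }
      exact (Cn _ _ _ E). }
    rewrite <- M. apply rdC.
Qed.
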